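(* Let $q$ be a prime power, $s,\ell$ positive integers, $\alpha,\beta\in\mathbb{F}_q^*$, $r$ the multiplicative order of $\beta$, and assume $q\equiv 1\pmod{r\ell}$. Let $\omega\in\mathbb{F}_q$ be a primitive $r\ell$-th root of unity with $\omega^\ell=\beta$, and $\eta_k(y)=\prod_{j\ne k,\,0\le j\le \ell-1}\frac{y-\omega^{1+jr}}{\omega^{1+kr}-\omega^{1+jr}}$ for $0\le k\le\ell-1$. Let $\mathcal{C}$ be an ideal (two-dimensional $(\alpha,\beta)$-constacyclic code) of $\mathcal{R}=\mathbb{F}_q[x,y]/\langle x^s-\alpha,y^\ell-\beta\rangle$, let $p_j(x)$ be the monic divisor of $x^s-\alpha$ generating the ideal $I_j=\{f(x)\in\mathbb{F}_q[x]/\langle x^s-\alpha\rangle:\eta_j(y)f(x)\in\mathcal{C}\}$, and $a_j=\deg p_j(x)$. Then $\dim_{\mathbb{F}_q}\mathcal{C}=s\ell-a_0-a_1-\cdots-a_{\ell-1}$.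
   Context: Elements of $\mathcal{R}$ are identified with $s\times\ell$ arrays over $\mathbb{F}_q$ via their coefficients of $x^iy^j$, $0\le i\le s-1$, $0\le j\le\ell-1$. *)

(* Defs.v *)
From HB Require Import structures.
From mathcomp Require Import all_boot all_order all_algebra.
Set Implicit Arguments. Unset Strict Implicit. Unset Printing Implicit Defensive.
Import GRing.Theory.
Local Open Scope ring_scope.

(* Bivariate polynomials F[x,y] are {poly {poly F}}: the outer variable is y,
   coefficients are polynomials in x.  Elements of
   R = F[x,y]/<x^s - alpha, y^l - beta> are s x l arrays over F
   (entry (i,k) = coefficient of x^i y^k). *)

Section TwoDim.
Variables (F : fieldType) (s l : nat) (alpha beta : F).

Definition xmod : {poly F} := 'X^s - alpha%:P.
Definition ymod : {poly {poly F}} := 'X^l - (beta%:P)%:P.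

Definition redR (P : {poly {poly F}}) : 'M[F]_(s, l) :=
  let P' := map_poly (fun c : {poly F} => c %% xmod) (P %% ymod) in
  \matrix_(i < s, k < l) (P'`_k)`_i.

Definition liftR (A : 'M[F]_(s, l)) : {poly {poly F}} :=
  \sum_(k < l) (\sum_(i < s) A i k *: 'X^i)%:P * 'X^k.

(* C is an ideal of R (C is given as an F-subspace, which every ideal is) *)
Definition is_idealR (C : {vspace 'M[F]_(s, l)}) : Prop :=
  forall (P : {poly {poly F}}) (c : 'M[F]_(s, l)),
    c \in C -> redR (P * liftR c) \in C.

End TwoDim.

Definition eta_poly (F : fieldType) (l r : nat) (w : F) (k : 'I_l) : {poly F} :=
  \prod_(j < l | j != k)
    (('X - (w ^+ (1 + j * r))%:P) * ((w ^+ (1 + k * r) - w ^+ (1 + j * r))^-1)%:P).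

(* Main.v *)
Require Import Defs.
From HB Require Import structures.
From mathcomp Require Import all_boot all_order all_algebra.
From mathcomp Require Import ring zify.
Import GRing.Theory.
Local Open Scope ring_scope.

Section P3.
Variables (F : finFieldType) (s l r : nat) (alpha beta omega : F).
Hypotheses (s_gt0 : (0 < s)%N) (l_gt0 : (0 < l)%N)
  (r_prim : r.-primitive_root beta)
  (w_prim : (r * l).-primitive_root omega) (wl : omega ^+ l = beta).

Definition th (j : nat) := omega ^+ (1 + j * r).
Definition eta (k : 'I_l) := eta_poly r omega k.

Lemma r_gt0 : (0 < r)%N. Proof. exact: prim_order_gt0 r_prim. Qed.

Lemma th_neq (j k : 'I_l) : j != k -> th j != th k.
Proof.
move=> jk; rewrite /th (eq_prim_root_expr w_prim) eqn_modDl.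
have hr := r_gt0.
rewrite !modn_small; first by rewrite eqn_pmul2r.
- by rewrite mulnC ltn_pmul2l.
- by rewrite mulnC ltn_pmul2l.
Qed.

Lemma th_l j : th j ^+ l = beta.
Proof.
rewrite /th -exprM mulnDl mul1n exprD wl.
have -> : (j * r * l = (r * l) * j)%N by rewrite -mulnA mulnC.
by rewrite exprM (prim_expr_order w_prim) expr1n mulr1.
Qed.

Lemma eta_th (k j : 'I_l) : (eta k).[th j] = (k == j)%:R.
Proof.
rewrite /eta /eta_poly horner_prod.
have [<-|kj] := eqVneq k j.
  apply: big1 => i ik; rewrite hornerM hornerC hornerXsubC mulfV //.
  by rewrite subr_eq0; apply: th_neq; rewrite eq_sym.
rewrite (bigD1 j) 1?eq_sym //= hornerM hornerXsubC subrr !mul0r //.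
Qed.

Lemma prodX : \prod_(j < l) ('X - (th j)%:P) = 'X^l - beta%:P.
Proof.
have := @uniq_roots_prod_XsubC _ ('X^l - beta%:P) [seq th (nat_of_ord j) | j <- enum 'I_l].
case.
- apply/allP => x /mapP [j _ ->]; rewrite /root !hornerE th_l subrr //.
- rewrite uniq_rootsE map_inj_uniq ?enum_uniq // => i j /eqP.
  by apply: contraTeq => /th_neq.
move=> q Hq.
have Hp : \prod_(z <- [seq th (nat_of_ord j) | j <- enum 'I_l]) ('X - z%:P) = \prod_(j < l) ('X - (th j)%:P).
  by rewrite big_map big_enum.
rewrite Hp in Hq.
have mP : \prod_(j < l) ('X - (th j)%:P) \is monic by apply: monic_prod => j _; apply: monicXsubC.
have sP : size (\prod_(j < l) ('X - (th j)%:P)) = l.+1.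
  by rewrite -Hp size_prod_XsubC size_map size_enum_ord.
have mX : 'X^l - beta%:P \is monic by apply: monicXnsubC.
have qm : q \is monic by rewrite -(monicMr _ mP) -Hq.
have qn0 : q != 0 by apply: monic_neq0.
have sq : size q = 1%N.
  have := size_Mmonic qn0 mP; rewrite -Hq size_XnsubC // sP.
  rewrite addnS /=; lia.
have q1 : q = 1.
  rewrite [q]size1_polyC ?sq //; move: qm; rewrite monicE lead_coefE sq /= => /eqP ->.
  done.
by rewrite Hq q1 mul1r.
Qed.

Lemma eta_mulX (k : 'I_l) : exists c : F, eta k * ('X - (th k)%:P) = c%:P * ('X^l - beta%:P).
Proof.
rewrite /eta /eta_poly big_split /= -prodX.
exists (\prod_(j < l | j != k) (omega ^+ (1 + k * r) - omega ^+ (1 + j * r))^-1).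
rewrite rmorph_prod /= [X in _ = _ * X](bigD1 k) //=.
rewrite /th; ring.
Qed.

Lemma eta_neq0 k : eta k != 0.
Proof. by apply/eqP => e0; have := eta_th k k; rewrite e0 horner0 eqxx => /eqP; rewrite eq_sym oner_eq0. Qed.

Lemma size_eta k : (size (eta k) <= l)%N.
Proof.
have [c Hc] := eta_mulX k.
have := size_Mmonic (eta_neq0 k) (monicXsubC (th k)).
rewrite Hc size_XsubC addn2 /= => H.
have := size_mul_leq c%:P ('X^l - beta%:P).
rewrite H size_XnsubC //.
have := size_polyC_leq1 c. lia.
Qed.

Definition Vm : 'M[F]_l := \matrix_(t < l, j < l) th j ^+ t.
Definition Hm : 'M[F]_l := \matrix_(k < l, t < l) (eta k)`_t.

Lemma HV : Hm *m Vm = 1%:M.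
Proof.
apply/matrixP => k j; rewrite !mxE.
rewrite -(eta_th k j) (horner_coef_wide _ (size_eta k)).
by apply: eq_bigr => t _; rewrite !mxE.
Qed.

Lemma VH : Vm *m Hm = 1%:M.
Proof. exact: mulmx1C HV. Qed.


Local Notation xm := (xmod s alpha).
Local Notation ym := (ymod l beta).
Local Notation RR := (redR s l alpha beta).
Definition lift (k : 'I_l) : {poly {poly F}} := map_poly polyC (eta k).
Definition Em (k : 'I_l) (g : {poly F}) : 'M[F]_(s, l) :=
  \matrix_(i < s, t < l) (g`_i * (eta k)`_t).

Lemma size_ym : size ym = l.+1.
Proof. by rewrite /ymod size_XnsubC. Qed.

Lemma size_xm : size xm = s.+1.
Proof. by rewrite /xmod size_XnsubC. Qed.

Lemma redR_eta k f : RR (lift k * f%:P) = Em k (f %% xm).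
Proof.
rewrite /redR modp_small; last first.
  rewrite size_ym ltnS; apply: leq_trans (size_mul_leq _ _) _.
  have := size_polyC_leq1 f; have := size_eta k; rewrite /lift size_map_polyC -subn1. move=> h1 h2. by rewrite leq_subLR addnC leq_add.
apply/matrixP => i t; rewrite !mxE coef_map_id0 ?mod0p // coefMC coef_map /=.
by rewrite mul_polyC modpZl coefZ mulrC.
Qed.

Lemma redR_mod U R : RR (U * ym + R) = RR R.
Proof.
rewrite /redR Pdiv.IdomainUnit.modpD ?modp_mull ?add0r //.
by rewrite (eqP (monicXnsubC _ l_gt0)) unitr1.
Qed.


Definition cpoly {n} (v : 'I_n -> F) : {poly F} :=
  \poly_(i < n) (if insub i is Some j then v j else 0).

Lemma cpoly_coef n v (j : 'I_n) : (cpoly v)`_j = v j.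
Proof. by rewrite coef_poly ltn_ord valK. Qed.

Lemma cpoly_def n (v : 'I_n -> F) : cpoly v = \sum_(i < n) v i *: 'X^i.
Proof. by rewrite /cpoly poly_def; apply: eq_bigr => i _; rewrite valK. Qed.

Lemma size_cpoly n v : (size (@cpoly n v) <= n)%N.
Proof. exact: size_poly. Qed.

Definition fpoly (A : 'M[F]_(s, l)) (k : 'I_l) : {poly F} := cpoly (fun i => (A *m Vm) i k).

Lemma eval_lift A (k : 'I_l) : (liftR A).[(th k)%:P] = fpoly A k.
Proof.
rewrite /liftR /fpoly cpoly_def horner_sum.
under eq_bigr => t _ do rewrite hornerCM hornerXn -rmorphXn mulrC mul_polyC scaler_sumr.
under [RHS]eq_bigr => i _ do rewrite mxE scaler_suml.
rewrite exchange_big /=; apply: eq_bigr => t _; apply: eq_bigr => i _.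
by rewrite scalerA mxE mulrC.
Qed.

Lemma size_fpoly A k : (size (fpoly A k) <= s)%N.
Proof. exact: size_cpoly. Qed.


Lemma ideal_part (C : {vspace 'M[F]_(s, l)}) A k :
  is_idealR alpha beta C -> A \in C -> RR (lift k * (fpoly A k)%:P) \in C.
Proof.
move=> idC AC.
have := idC (lift k) A AC.
suff [U ->] : exists U, lift k * liftR A = U * ym + lift k * (fpoly A k)%:P by rewrite redR_mod.
have : root (liftR A - (fpoly A k)%:P) (th k)%:P.
  by rewrite /root hornerD hornerN hornerC eval_lift subrr.
case/factor_theorem => q Hq.
have [c Hc] := eta_mulX k.
exists (q * (c%:P)%:P).
have E : lift k * ('X - ((th k)%:P)%:P) = (c%:P)%:P * ym.
  have := congr1 (map_poly polyC) Hc.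
  rewrite rmorphM /= rmorphB /= map_polyX map_polyC /= => ->.
  by rewrite rmorphM /= map_polyC rmorphB /= map_polyXn map_polyC.
rewrite (_ : liftR A = q * ('X - ((th k)%:P)%:P) + (fpoly A k)%:P); last by rewrite -Hq subrK.
by rewrite mulrDr mulrCA E mulrA.
Qed.


Lemma decomp A : A = \sum_(k < l) Em k (fpoly A k).
Proof.
apply/matrixP => i t; rewrite summxE.
have -> : A i t = (A *m Vm *m Hm) i t by rewrite -mulmxA VH mulmx1.
rewrite mxE.
by apply: eq_bigr => k _; rewrite [Em _ _ _ _]mxE [Hm _ _]mxE /fpoly cpoly_coef.
Qed.

Lemma Em_coef k g (i : 'I_s) j : (Em k g *m Vm) i j = g`_i * (k == j)%:R.
Proof.
rewrite !mxE; under eq_bigr do rewrite !mxE -mulrA.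
by rewrite -mulr_sumr -(eta_th k j) (horner_coef_wide _ (size_eta k)).
Qed.

Lemma Em_inj k (g h : {poly F}) : (size g <= s)%N -> (size h <= s)%N -> Em k g = Em k h -> g = h.
Proof.
move=> sg sh E; apply/polyP => i; case: (ltnP i s) => [lis|gei].
  have := congr1 (fun M => (M *m Vm) (Ordinal lis) k) E.
  by rewrite /= !Em_coef eqxx !mulr1.
by rewrite !nth_default // (leq_trans _ gei).
Qed.

Lemma Em0 k : Em k 0 = 0.
Proof. by apply/matrixP => i j; rewrite !mxE coef0 mul0r. Qed.

Lemma sumEmV (g : 'I_l -> {poly F}) (i : 'I_s) j :
  ((\sum_(k < l) Em k (g k)) *m Vm) i j = (g j)`_i.
Proof.
rewrite mulmx_suml summxE; under eq_bigr do rewrite Em_coef.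
rewrite (bigD1 j) //= eqxx mulr1 big1 ?addr0 // => k /negbTE ->; by rewrite mulr0.
Qed.


Lemma Em_lin k (a : F) g h : Em k (a *: g + h) = a *: Em k g + Em k h.
Proof. by apply/matrixP => i t; rewrite !mxE coefD coefZ mulrDl mulrA. Qed.

Lemma cpoly_lin n (a : F) (u v : 'cV[F]_n) :
  cpoly (fun i => (a *: u + v) i 0) = a *: cpoly (fun i => u i ord0) + cpoly (fun i => v i ord0).
Proof.
rewrite !cpoly_def scaler_sumr -big_split /=; apply: eq_bigr => i _.
by rewrite !mxE scalerDl scalerA.
Qed.

Lemma cpoly_col n (u : {poly F}) : (size u <= n)%N -> cpoly (fun i => (\col_(j < n) u`_j) i 0) = u.
Proof.
move=> su; apply/polyP => j; case: (ltnP j n) => [h|h].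
  by rewrite (_ : j = Ordinal h) // cpoly_coef mxE.
rewrite nth_default; last exact: leq_trans (size_cpoly _ _) h.
by rewrite nth_default //; exact: leq_trans su h.
Qed.

Variable C : {vspace 'M[F]_(s, l)}.
Variable p : 'I_l -> {poly F}.
Hypothesis idC : is_idealR alpha beta C.
Hypothesis p_monic : forall k, p k \is monic.
Hypothesis p_dvd : forall k, p k %| xm.
Hypothesis hypC : forall j f, RR (lift j * f%:P) \in C <-> exists g, f %% xm = (g * p j) %% xm.

Definition dk k := (size (p k)).-1.

Lemma size_p k : size (p k) = (dk k).+1.
Proof. by rewrite /dk prednK // size_poly_gt0 monic_neq0. Qed.

Lemma dk_le k : (dk k <= s)%N.
Proof.
have := dvdp_leq _ (p_dvd k); rewrite size_xm size_p ltnS; apply.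
by rewrite -size_poly_eq0 size_xm.
Qed.

Definition mk k (v : 'cV[F]_(s - dk k)) : 'M[F]_(s, l) :=
  Em k (cpoly (fun i => v i ord0) * p k).

Lemma mk_lin k : linear (mk k).
Proof. by move=> a u v; rewrite /mk cpoly_lin mulrDl -scalerAl Em_lin. Qed.

HB.instance Definition _ k := GRing.isLinear.Build F _ _ *:%R (mk k) (mk_lin k).

Definition D k := (linfun (mk k) @: fullv)%VS.

Lemma size_mkpoly k (v : 'cV[F]_(s - dk k)) : (size (cpoly (fun i => v i ord0) * p k)%R <= s)%N.
Proof.
apply: leq_trans (size_mul_leq _ _) _.
have := size_cpoly _ (fun i => v i ord0); have := dk_le k; rewrite size_p.
move=> h1 h2; rewrite addnS /=.
move: (size (cpoly _)) h2 => a h2; move: (dk k) h1 h2 => b h1 h2; lia.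
Qed.

Lemma dimD k : \dim (D k) = (s - dk k)%N.
Proof.
rewrite /D limg_dim_eq ?dimvf; last first.
  rewrite capfv; apply/eqP/lker0P => u v; rewrite !lfunE /= /mk.
  move/Em_inj => /(_ (size_mkpoly k u) (size_mkpoly k v)).
  move/(mulIf (monic_neq0 (p_monic k))) => E.
  apply/matrixP => i j; rewrite !ord1.
  by have := congr1 (fun q : {poly F} => q`_i) E; rewrite /= !cpoly_coef.
by rewrite dim_matrix mulr1.
Qed.


Lemma memD k x : x \in D k -> exists2 g : {poly F}, (size g <= s)%N & x = Em k g.
Proof.
case/memv_imgP => v _ ->; rewrite lfunE /= /mk.
by exists (cpoly (fun i => v i ord0) * p k) => //; apply: size_mkpoly.
Qed.

Lemma C_eq : C = (\sum_(k < l) D k)%VS.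
Proof.
apply/eqP; rewrite eqEsubv; apply/andP; split.
  apply/subvP => A AC; rewrite (decomp A); apply: memv_sumr => k _.
  have := @ideal_part C A k idC AC; rewrite hypC => -[g Hg].
  have sf := size_fpoly A k.
  rewrite modp_small ?size_xm ?ltnS // in Hg.
  have dv : p k %| fpoly A k.
    by rewrite Hg -(dvdp_mod _ (p_dvd k)) dvdp_mulIr.
  set u := fpoly A k %/ p k.
  have Hu : fpoly A k = u * p k by rewrite divpK.
  have su : (size u <= s - dk k)%N.
    have [->|un0] := eqVneq u 0; first by rewrite size_poly0.
    move: sf; rewrite Hu size_Mmonic // size_p addnS /=.
    move: (size u) (dk_le k) => a h1 h2; lia.
  apply/memv_imgP; exists (\col_(j < s - dk k) u`_j); first exact: memvf.
  by rewrite lfunE /= /mk cpoly_col // -Hu.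
apply/subv_sumP => k _; apply/subvP => x /memv_imgP [v _ ->].
rewrite lfunE /= /mk.
rewrite -(modp_small (p := cpoly (fun i => v i ord0) * p k) (q := xm)); last first.
  by rewrite size_xm ltnS size_mkpoly.
rewrite -redR_eta; apply/hypC.
by exists (cpoly (fun i => v i ord0)).
Qed.

Lemma D_direct : directv (\sum_(k < l) D k).
Proof.
apply/directv_sum_independent => us Hus Hsum j _.
have col0 : forall i : 'I_s, (us j *m Vm) i j = 0.
  move=> i; have := congr1 (fun M : 'M[F]_(s, l) => (M *m Vm) i j) Hsum.
  rewrite /= mulmx_suml summxE mul0mx mxE (bigD1 j) //= big1 ?addr0 // => k kj.
  by have [g _ ->] := memD _ _ (Hus k isT); rewrite Em_coef (negbTE kj) mulr0.
have [g sg E] := memD _ _ (Hus j isT).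
suff g0 : g = 0 by rewrite E g0 Em0.
apply/polyP => i; rewrite coef0; case: (ltnP i s) => [h|h].
  by have := col0 (Ordinal h); rewrite E Em_coef eqxx mulr1.
by rewrite nth_default // (leq_trans sg h).
Qed.

Lemma dimC : \dim C = (s * l - \sum_(k < l) dk k)%N.
Proof.
rewrite C_eq (directvP D_direct) /=.
under eq_bigr do rewrite dimD.
have H : (\sum_(k < l) (s - dk k) + \sum_(k < l) dk k = s * l)%N.
  rewrite -big_split /=; under eq_bigr do rewrite subnK ?dk_le //.
  by rewrite sum_nat_const card_ord mulnC.
by rewrite -H addnK.
Qed.

End P3.

Theorem mainTheorem3 (F : finFieldType) (s l r : nat) (alpha beta omega : F)
  (C : {vspace 'M[F]_(s, l)}) (p : 'I_l -> {poly F}) :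
  (0 < s)%N -> (0 < l)%N ->
  alpha != 0 -> beta != 0 ->
  r.-primitive_root beta ->
  #|F| = 1 %[mod r * l] ->
  (r * l).-primitive_root omega -> omega ^+ l = beta ->
  is_idealR alpha beta C ->
  (forall j : 'I_l,
     p j \is monic /\ p j %| xmod s alpha /\
     (forall f : {poly F},
        redR s l alpha beta (map_poly polyC (eta_poly r omega j) * f%:P) \in C <->
        exists g : {poly F}, f %% xmod s alpha = (g * p j) %% xmod s alpha)) ->
  \dim C = (s * l - \sum_(j < l) (size (p j)).-1)%N.
Proof.
move=> s0 l0 _ _ rp _ wp wl idC H.
have := dimC _ _ _ _ _ _ _ s0 l0 rp wp wl _ _ idC (fun k => (H k).1) (fun k => (H k).2.1).
move=> /(_ (fun j f => (H j).2.2 f)).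
by [].
Qed.
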